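(* Let $\kappa$ be a regular cardinal, $\lambda$ an infinite cardinal, and $X\subseteq\kappa^\kappa$. If there is an $L^*_{\kappa^+\lambda}$-sentence $\varphi$ such that for all $\eta\in\kappa^\kappa$, $\eta\in X$ if and only if $M^*_\eta\models\varphi$, then $X$ is $(\kappa,\kappa^{<\lambda})$-Borel.
   Context: Coding of structures: $L=\{Q_m\mid m<\omega\}$ is a countable relational vocabulary and $\pi:\kappa^{<\omega}\to\kappa$ a fixed bijection. For $\eta\in\kappa^\kappa$, $M_\eta$ is the $L$-structure with domain $\kappa$ in which $(a_1,\dots,a_n)\in Q_m^{M_\eta}$ iff $Q_m$ has arity $n$ and $\eta(\pi(m,a_1,\dots,a_n))>0$. For each $n<\omega$ fix a well-ordering $<^n$ of $\kappa^n$ of order type $\kappa$; for each cardinal $\theta<\kappa$ let $R^n_\theta=\{a\in\kappa^n\mid|\{b\mid b<^n a\}|=\theta\}$. $L^+=\{<^n,R^n_\theta\mid n<\omega,\theta<\kappa\}$, $L^*=L\cup L^+$, and $M^*_\eta$ is the expansion of $M_\eta$ to $L^*$ interpreting these symbols as described. $L^*_{\kappa^+\lambda}$ is the infinitary logic in vocabulary $L^*$ with conjunctions/disjunctions of at most $\kappa$ formulas and quantification over fewer than $\lambda$ variables at once. Topology: basic $\kappa$-open sets are $N_\eta=\{\zeta\in\kappa^\kappa\mid\eta\subseteq\zeta\}$ for $\eta:Y\to\kappa$, $Y\subseteq\kappa$, $|Y|<\kappa$, and $\emptyset$. For a cardinal $\mu$, the $(\kappa,\mu)$-Borel sets form the smallest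 class containing the basic $\kappa$-open sets and closed under complements, unions of at most $\mu$ sets and intersections of at most $\mu$ sets. *)

(* Defs.v *)
From Stdlib Require List.
From mathcomp Require Import all_boot.
Set Implicit Arguments.
Unset Strict Implicit.
Unset Printing Implicit Defensive.

Definition card_le (A B : Type) : Prop := exists f : A -> B, injective f.
Definition card_lt (A B : Type) : Prop := ~ card_le B A.

Definition well_order (T : Type) (lt : T -> T -> Prop) : Prop :=
  well_founded lt /\
  (forall x y z, lt x y -> lt y z -> lt x z) /\
  (forall x y, lt x y \/ x = y \/ lt y x).

Definition seg (T : Type) (lt : T -> T -> Prop) (x : T) : Type := {y : T | lt y x}.

(* (T, lt) is a well-order whose order type is a cardinal (initial ordinal) *)
Definition is_cardinal (T : Type) (lt : T -> T -> Prop) : Prop :=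
  well_order lt /\ forall x : T, ~ card_le T (seg lt x).

Definition infinite_type (T : Type) : Prop := card_le nat T.

Definition regular (T : Type) (lt : T -> T -> Prop) : Prop :=
  forall A : T -> Prop, card_lt {x | A x} T -> exists b, forall x, A x -> lt x b.

Definition cardinal_elt (T : Type) (lt : T -> T -> Prop) (th : T) : Prop :=
  forall y, lt y th -> ~ card_le (seg lt th) (seg lt y).

Definition finite_ordinals (T : Type) (lt : T -> T -> Prop) (iota : nat -> T) : Prop :=
  (forall x, ~ lt x (iota 0)) /\
  (forall n, lt (iota n) (iota n.+1) /\
             forall x, ~ (lt (iota n) x /\ lt x (iota n.+1))).

(* kappa^{<lambda} as the type  Sigma_{a < lambda} (a -> kappa) *)
Definition KLess (K L : Type) (ltL : L -> L -> Prop) : Type :=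
  {a : L & seg ltL a -> K}.

Inductive borel (K M : Type) : ((K -> K) -> Prop) -> Prop :=
| borel_empty : borel M (fun _ => False)
| borel_basic (Y : K -> Prop) (eta : K -> K) :
    card_lt {x | Y x} K ->
    borel M (fun zeta => forall x, Y x -> zeta x = eta x)
| borel_compl (A : (K -> K) -> Prop) :
    borel M A -> borel M (fun zeta => ~ A zeta)
| borel_union (J : Type) (F : J -> (K -> K) -> Prop) :
    card_le J M -> (forall i, borel M (F i)) ->
    borel M (fun zeta => exists i, F i zeta)
| borel_inter (J : Type) (F : J -> (K -> K) -> Prop) :
    card_le J M -> (forall i, borel M (F i)) ->
    borel M (fun zeta => forall i, F i zeta)
| borel_ext (A B : (K -> K) -> Prop) :
    borel M A -> (forall zeta, A zeta <-> B zeta) -> borel M B.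

Inductive formula (K V : Type) : Type :=
| fEq (x y : V)
| fQ (m : nat) (xs : seq V)
| fLt (xs ys : seq V)                     (* xs <^n ys, n = size xs *)
| fR (theta : K) (xs : seq V)             (* R^n_theta(xs), n = size xs *)
| fNot (phi : formula K V)
| fAnd (J : Type) (phis : J -> formula K V)
| fOr (J : Type) (phis : J -> formula K V)
| fEx (W : V -> Prop) (phi : formula K V)
| fAll (W : V -> Prop) (phi : formula K V).

Section Logic.
Variables (K L V : Type) (ltK : K -> K -> Prop) (ltL : L -> L -> Prop)
          (ar : nat -> nat).

Fixpoint in_logic (phi : formula K V) : Prop :=
  match phi with
  | fEq _ _ => True
  | fQ m xs => size xs = ar m
  | fLt xs ys => 0 < size xs /\ size ys = size xs
  | fR th xs => 0 < size xs /\ cardinal_elt ltK th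
  | fNot p => in_logic p
  | @fAnd _ _ J ps => card_le J K /\ forall i, in_logic (ps i)
  | @fOr _ _ J ps => card_le J K /\ forall i, in_logic (ps i)
  | fEx W p => card_lt {v | W v} L /\ in_logic p
  | fAll W p => card_lt {v | W v} L /\ in_logic p
  end.

Fixpoint free (phi : formula K V) (v : V) : Prop :=
  match phi with
  | fEq x y => v = x \/ v = y
  | fQ _ xs => List.In v xs
  | fLt xs ys => List.In v xs \/ List.In v ys
  | fR _ xs => List.In v xs
  | fNot p => free p v
  | @fAnd _ _ J ps => exists i, free (ps i) v
  | @fOr _ _ J ps => exists i, free (ps i) v
  | fEx W p => ~ W v /\ free p v
  | fAll W p => ~ W v /\ free p v
  end.

Definition sentence (phi : formula K V) : Prop := forall v, ~ free phi v.

Variables (iota : nat -> K) (pi : seq K -> K) (ltn : nat -> seq K -> seq K -> Prop).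

Definition Q_int (eta : K -> K) (m : nat) (a : seq K) : Prop :=
  size a = ar m /\ ltK (iota 0) (eta (pi (iota m :: a))).

Definition R_int (th : K) (a : seq K) : Prop :=
  exists f : {b : seq K | size b = size a /\ ltn (size a) b a} -> seg ltK th,
    bijective f.

Fixpoint sat (eta : K -> K) (s : V -> K) (phi : formula K V) : Prop :=
  match phi with
  | fEq x y => s x = s y
  | fQ m xs => Q_int eta m (map s xs)
  | fLt xs ys => ltn (size xs) (map s xs) (map s ys)
  | fR th xs => R_int th (map s xs)
  | fNot p => ~ sat eta s p
  | @fAnd _ _ J ps => forall i, sat eta s (ps i)
  | @fOr _ _ J ps => exists i, sat eta s (ps i)
  | fEx W p => exists s' : V -> K, (forall v, ~ W v -> s' v = s v) /\ sat eta s' p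
  | fAll W p => forall s' : V -> K, (forall v, ~ W v -> s' v = s v) -> sat eta s' p
  end.

Definition models (eta : K -> K) (phi : formula K V) : Prop :=
  forall s : V -> K, sat eta s phi.
End Logic.

Definition ordertype_kappa (K : Type) (ltK : K -> K -> Prop) (n : nat)
  (lt : seq K -> seq K -> Prop) : Prop :=
  exists f : {a : seq K | size a = n} -> K,
    bijective f /\ forall a b, lt (sval a) (sval b) <-> ltK (f a) (f b).

(* Main.v *)
Require Import Defs.
From mathcomp Require Import all_boot.
From Stdlib Require Import ClassicalEpsilon FunctionalExtensionality ProofIrrelevance Eqdep.
Set Implicit Arguments.
Unset Strict Implicit.
Unset Strict Implicit.

Lemma card_le_trans A B C : card_le A B -> card_le B C -> card_le A C.
Proof.
move=> [f hf] [g hg]; exists (g \o f) => x y /= e; exact/hf/hg.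
Qed.

Lemma card_le_refl A : card_le A A.
Proof. by exists id. Qed.

Lemma compar (L : Type) (lt : L -> L -> Prop) (T : Type) :
  well_order lt -> inhabited L -> ~ card_le L T -> exists a, card_le T (seg lt a).
Proof.
move=> [wf [tr tri]] [a0] nLT.
case: (excluded_middle_informative (inhabited T)) => [inhT|ninhT]; last first.
  exists a0; exists (fun t => match ninhT (inhabits t) with end) => x.
  by case: (ninhT (inhabits x)).
apply: NNPP => H.
pose F := fun (a : L) (rec : forall b, lt b a -> T) =>
  epsilon inhT (fun t => forall b (h : lt b a), rec b h <> t).
pose f := Fix wf (fun _ => T) F.
have feq : forall a, f a = F a (fun y _ => f y).
  move=> a; rewrite /f; apply: Fix_eq => x g1 g2 e.
  have -> : g1 = g2 by apply: functional_extensionality_dep => y;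
     apply: functional_extensionality_dep => p; apply: e.
  by [].
have key : forall a y, lt y a -> f y <> f a.
  move=> a y hy.
  case: (classic (exists t, forall b (h : lt b a), f b <> t)) => [ex|nex].
    rewrite (feq a) /F; exact: (epsilon_spec inhT _ ex) y hy.
  exfalso; apply: H; exists a.
  have cov : forall t, exists b : seg lt a, f (sval b) = t.
    move=> t; apply: NNPP => nt; apply: nex; exists t => b h e.
    by apply: nt; exists (exist _ b h).
  exists (fun t => proj1_sig (constructive_indefinite_description _ (cov t))).
  move=> t1 t2 e.
  move: e; case: (constructive_indefinite_description _ (cov t1)) => b1 h1 /=.
  case: (constructive_indefinite_description _ (cov t2)) => b2 h2 /= e.
  by rewrite -h1 -h2 e.
apply: nLT; exists f => x y e.
case: (tri x y) => [h|[//|h]]; first by case: (key _ _ h).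
by case: (key _ _ h).
Qed.

Lemma borel_const (K M : Type) (P : Prop) : borel (K:=K) M (fun _ => P).
Proof.
case: (classic P) => hP.
  apply: (borel_ext (borel_compl (borel_empty K M))) => z; tauto.
apply: (borel_ext (borel_empty K M)) => z; tauto.
Qed.

Lemma fun_le_M (K L : Type) (ltL : L -> L -> Prop) (T : Type) (k0 : K) :
  well_order ltL -> inhabited L -> ~ card_le L T ->
  card_le (T -> K) (KLess K ltL).
Proof.
move=> wo inh nLT; case: (compar wo inh nLT) => a [g hg].
pose ext := fun (h : T -> K) (y : seg ltL a) =>
  match excluded_middle_informative (exists t, g t = y) with
  | left ex => h (proj1_sig (constructive_indefinite_description _ ex))
  | right _ => k0 end.
exists (fun h => existT (fun a => seg ltL a -> K) a (ext h)).
move=> h1 h2 e; have e2 := inj_pair2 _ _ _ _ _ e.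
apply: functional_extensionality => t.
have := f_equal (fun F => F (g t)) e2; rewrite /ext.
case: excluded_middle_informative => [ex|nex]; last by case: nex; exists t.
case: (constructive_indefinite_description _ ex) => t' ht' /=.
by rewrite (hg _ _ ht').
Qed.

Lemma K_le_M (K L : Type) (ltL : L -> L -> Prop) (k0 : K) :
  well_order ltL -> infinite_type L -> card_le K (KLess K ltL).
Proof.
move=> wo [i hi].
have nLu : ~ card_le L unit.
  move=> [f hf]; have := hi 0 1 (hf (i 0) (i 1) _); case: (f (i 0)); case: (f (i 1)); by move=> /(_ erefl).
apply: (card_le_trans _ (fun_le_M k0 wo (inhabits (i 0)) nLu)).
exists (fun k (_ : unit) => k) => x y e.
exact: (f_equal (fun F => F tt) e).
Qed.

Lemma map_ext_In (A B : Type) (f g : A -> B) (xs : seq A) :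
  (forall v, List.In v xs -> f v = g v) -> map f xs = map g xs.
Proof.
elim: xs => //= x xs IH H; rewrite H; last by left.
by rewrite IH // => v hv; apply: H; right.
Qed.

Lemma sat_free (K V : Type) ltK ar iota pi ltn eta (phi : formula K V) :
  forall s1 s2 : V -> K, (forall v, free phi v -> s1 v = s2 v) ->
  (sat ltK ar iota pi ltn eta s1 phi <-> sat ltK ar iota pi ltn eta s2 phi).
Proof.
elim: phi => /=.
- by move=> x y s1 s2 H; rewrite (H x) ?(H y); tauto.
- by move=> m xs s1 s2 H; rewrite (map_ext_In (f:=s1) (g:=s2)).
- move=> xs ys s1 s2 H.
  by rewrite (map_ext_In (f:=s1) (g:=s2) (xs:=xs)) ?(map_ext_In (f:=s1) (g:=s2) (xs:=ys)) => // v hv; apply: H; tauto.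
- by move=> th xs s1 s2 H; rewrite (map_ext_In (f:=s1) (g:=s2)).
- by move=> p IH s1 s2 H; rewrite (IH s1 s2 H).
- move=> J ps IH s1 s2 H; split=> h i.
    by apply/(IH i s1 s2 _)/h => v hv; apply: H; exists i.
  by apply/(IH i s1 s2 _)/h => v hv; apply: H; exists i.
- move=> J ps IH s1 s2 H; split=> -[i h]; exists i.
    by apply/(IH i s1 s2 _)/h => v hv; apply: H; exists i.
  by apply/(IH i s1 s2 _)/h => v hv; apply: H; exists i.
- move=> W p IH.
  have dir : forall s1 s2 : V -> K, (forall v, ~ W v /\ free p v -> s1 v = s2 v) ->
    (exists s', (forall v, ~ W v -> s' v = s1 v) /\ sat ltK ar iota pi ltn eta s' p) ->
    (exists s', (forall v, ~ W v -> s' v = s2 v) /\ sat ltK ar iota pi ltn eta s' p).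
    move=> s1 s2 H [s1' [h1 h2]].
    exists (fun v => if excluded_middle_informative (W v) then s1' v else s2 v).
    split=> [v hv|]; first by case: excluded_middle_informative.
    apply/(IH s1' _ _)/h2 => v hv; case: excluded_middle_informative => // nw.
    by rewrite h1 // H.
  move=> s1 s2 H; split; apply: dir => // v hv; by rewrite H.
- move=> W p IH.
  have dir : forall s1 s2 : V -> K, (forall v, ~ W v /\ free p v -> s1 v = s2 v) ->
    (forall s', (forall v, ~ W v -> s' v = s1 v) -> sat ltK ar iota pi ltn eta s' p) ->
    (forall s', (forall v, ~ W v -> s' v = s2 v) -> sat ltK ar iota pi ltn eta s' p).
    move=> s1 s2 H h s2' h2.
    pose s1' := fun v => if excluded_middle_informative (W v) then s2' v else s1 v.
    have := h s1' (fun v hv => ltac:(by rewrite /s1'; case: excluded_middle_informative)).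
    move=> hs; apply: (proj1 (IH s1' s2' _) hs) => v hv; rewrite /s1'; case: excluded_middle_informative => // nw.
    by rewrite h2 // H.
  move=> s1 s2 H; split; apply: dir => // v hv; by rewrite H.
Qed.

Lemma single_small (K : Type) (c : K) : infinite_type K -> card_lt {x | x = c} K.
Proof.
move=> [i hi] [f hf].
have e : f (i 0) = f (i 1).
  case: (f (i 0)) => a ha; case: (f (i 1)) => b hb.
  subst; f_equal; apply: proof_irrelevance.
by have := hi _ _ (hf _ _ e).
Qed.

Lemma sig_inj (A : Type) (P : A -> Prop) (x y : sig P) : sval x = sval y -> x = y.
Proof. case: x => a ha; case: y => b hb /= e; subst; f_equal; apply: proof_irrelevance. Qed.

Lemma funinj (K V : Type) (W : V -> Prop) (s : V -> K) :
  card_le {s' : V -> K | forall v, ~ W v -> s' v = s v} ({v | W v} -> K).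
Proof.
exists (fun s' (w : {v | W v}) => sval s' (sval w)) => x y e.
apply: sig_inj; apply: functional_extensionality => v.
case: (classic (W v)) => hv.
  exact: (f_equal (fun F => F (exist _ v hv)) e).
by rewrite (svalP x v hv) (svalP y v hv).
Qed.

Lemma sat_borel (K L V : Type) ltK (ltL : L -> L -> Prop) ar iota pi ltn
  (KleM : card_le K (KLess K ltL))
  (funle : forall T : Type, ~ card_le L T -> card_le (T -> K) (KLess K ltL))
  (Kinf : infinite_type K) (phi : formula K V) :
  in_logic L ltK ar phi -> forall s,
  borel (KLess K ltL) (fun eta => sat ltK ar iota pi ltn eta s phi).
Proof.
elim: phi => /=.
- by move=> *; apply: borel_const.
- move=> m xs _ s; rewrite /Q_int.
  case: (classic (size (map s xs) = ar m)) => hs; last first.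
    by apply: (borel_ext (borel_empty _ _)) => z; tauto.
  set c := pi _.
  have hJ : card_le {k | ltK (iota 0) k} (KLess K ltL).
    apply: (card_le_trans _ KleM); exists (@sval _ _) => x y e; exact: sig_inj.
  have hF : forall k : {k | ltK (iota 0) k}, borel (KLess K ltL)
      (fun eta => forall x, x = c -> eta x = (fun _ => sval k) x).
    move=> k; apply: borel_basic; exact: single_small.
  apply: (borel_ext (borel_union hJ hF)).
  move=> z; split=> [[[k hk] /= h]|[_ h]]; first by split => //; rewrite (h c).
  by exists (exist _ _ h) => x ->.
- by move=> *; apply: borel_const.
- by move=> *; apply: borel_const.
- by move=> p IH h s; apply: borel_compl; apply: IH.
- move=> J ps IH [hJ hi] s; apply: borel_inter => [|i]; last exact: IH.
  exact: (card_le_trans hJ KleM).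
- move=> J ps IH [hJ hi] s; apply: borel_union => [|i]; last exact: IH.
  exact: (card_le_trans hJ KleM).
- move=> W p IH [hW hp] s.
  have hJ := (card_le_trans (funinj W s) (funle _ hW)).
  have hF : forall s' : {s' : V -> K | forall v, ~ W v -> s' v = s v},
     borel (KLess K ltL) (fun eta => sat ltK ar iota pi ltn eta (sval s') p).
    move=> i; exact: IH.
  apply: (borel_ext (borel_union hJ hF)).
  move=> z; split=> [[[s' hs'] /= h]|[s' [h1 h2]]]; first by exists s'.
  by exists (exist _ s' h1).
- move=> W p IH [hW hp] s.
  have hJ := (card_le_trans (funinj W s) (funle _ hW)).
  have hF : forall s' : {s' : V -> K | forall v, ~ W v -> s' v = s v},
     borel (KLess K ltL) (fun eta => sat ltK ar iota pi ltn eta (sval s') p).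
    move=> i; exact: IH.
  apply: (borel_ext (borel_inter hJ hF)).
  move=> z; split=> [h s' hs'|h [s' hs']]; last exact: h.
  exact: (h (exist _ s' hs')).
Qed.

Theorem lemma5p1
  (K : Type) (ltK : K -> K -> Prop)
  (HK : is_cardinal ltK) (HKinf : infinite_type K) (HKreg : regular ltK)
  (L : Type) (ltL : L -> L -> Prop)
  (HL : is_cardinal ltL) (HLinf : infinite_type L)
  (iota : nat -> K) (Hiota : finite_ordinals ltK iota)
  (ar : nat -> nat)
  (pi : seq K -> K) (Hpi : bijective pi)
  (ltn : nat -> seq K -> seq K -> Prop)
  (Hltn : forall n, 0 < n -> ordertype_kappa ltK n (ltn n))
  (X : (K -> K) -> Prop) :
  (exists (V : Type) (phi : formula K V),
      in_logic L ltK ar phi /\ sentence phi /\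
      forall eta : K -> K, X eta <-> models ltK ar iota pi ltn eta phi) ->
  borel (KLess K ltL) X.
Proof.
move=> [V [phi [hin [hsen hX]]]].
have wo := proj1 HL.
have inhL : inhabited L by case: HLinf => i _; exact: inhabits (i 0).
have KleM := K_le_M (iota 0) wo HLinf.
have funle : forall T : Type, ~ card_le L T -> card_le (T -> K) (KLess K ltL).
  by move=> T hT; apply: fun_le_M (iota 0) wo inhL hT.
have B := sat_borel iota pi ltn KleM funle HKinf hin (fun _ => iota 0).
apply: (borel_ext B) => eta; rewrite hX /models; split=> [h s|h]; last exact: h.
have hf : forall v, free phi v -> (fun _ : V => iota 0) v = s v by move=> v hv; case: (hsen v hv).
exact: (proj1 (sat_free ltK ar iota pi ltn eta hf) h).
Qed.
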